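(* Let $(B,+,\circ)$ be a left brace with Yang–Baxter map $r$, let $X\subseteq B$ be such that $(X,r)$ is a solution of the set-theoretic Yang–Baxter equation, and let $c\in B$ be central in $(B,\circ)$. (1) If $k_1(x)=c\circ x-c$ satisfies $k_1(X)\subseteq X$ and $c^2=c\circ c\in\mathrm{Soc}(B)$, then $k_1:X\to X$ is a reflection of $(X,r)$ with $k_1\circ k_1=\mathrm{id}_X$; in particular this holds if $c\circ c=0$. (2) If $2\,(c\circ x)=2c+2x$ for all $x\in X$, $c\circ c=0$, and $k_2(x)=c\circ x+c$ satisfies $k_2(X)\subseteq X$, then $k_2:X\to X$ is a reflection of $(X,r)$ with $k_2\circ k_2=\mathrm{id}_X$.
   Context: A (left) brace is a triple $(B,+,\circ)$ such that $(B,+)$ is an abelian group with identity $0$ (which is also the identity of $(B,\circ)$), $(B,\circ)$ is a group, and $x\circ(y+z)=x\circ y+x\circ z-x$ for all $x,y,z\in B$. The Yang–Baxter map is $r(x,y)=(\sigma_x(y),\tau_y(x))$ with $\sigma_x(y)=x\circ y-x$ and $\tau_y(x)=(\sigma_x(y))^{-1}\circ x-(\sigma_x(y))^{-1}$. For $X\subseteq B$, $(X,r)$ is a solution of the set-theoretic Yang–Baxter equation if $r(X\times X)\subseteq X\times X$ and $(\mathrm{id}\times r)(r\times\mathrm{id})(\mathrm{id}\times r)=(r\times\mathrm{id})(\mathrm{id}\times r)(r\times\mathrm{id})$ on $X^3$. A map $k:X\to X$ is a reflection of $(X,r)$ if $r(\mathrm{id}\times k)r(\mathrm{id}\times k)=(\mathrm{id}\times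 k)r(\mathrm{id}\times k)r$ on $X\times X$. $\mathrm{Soc}(B)=\{a\in B: a\circ b=a+b\ \forall b\in B\}$. *)

(* Defs.v *)
From HB Require Import structures.
From mathcomp Require Import all_boot all_order all_algebra.
Set Implicit Arguments. Unset Strict Implicit. Unset Printing Implicit Defensive.
Import GRing.Theory.
Local Open Scope ring_scope.

Definition is_brace (B : zmodType) (circ : B -> B -> B) (inv : B -> B) : Prop :=
  [/\ (forall x y z, circ x (circ y z) = circ (circ x y) z),
      (forall x, circ 0 x = x /\ circ x 0 = x),
      (forall x, circ (inv x) x = 0 /\ circ x (inv x) = 0) &
      (forall x y z, circ x (y + z) = circ x y + circ x z - x)].

Section YB.
Variables (B : zmodType) (circ : B -> B -> B) (inv : B -> B).

Definition bsigma (x y : B) : B := circ x y - x.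
Definition btau (y x : B) : B := circ (inv (bsigma x y)) x - inv (bsigma x y).
Definition yb_map (p : B * B) : B * B := (bsigma p.1 p.2, btau p.2 p.1).

Definition r12 (t : B * B * B) : B * B * B :=
  let: (x, y, z) := t in let: (a, b) := yb_map (x, y) in (a, b, z).
Definition r23 (t : B * B * B) : B * B * B :=
  let: (x, y, z) := t in let: (a, b) := yb_map (y, z) in (x, a, b).

Definition is_solution (X : B -> Prop) : Prop :=
  (forall x y, X x -> X y -> X (yb_map (x, y)).1 /\ X (yb_map (x, y)).2) /\
  (forall x y z, X x -> X y -> X z ->
     r23 (r12 (r23 (x, y, z))) = r12 (r23 (r12 (x, y, z)))).

Definition idk (k : B -> B) (p : B * B) : B * B := (p.1, k p.2).

Definition is_reflection (X : B -> Prop) (k : B -> B) : Prop :=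
  (forall x, X x -> X (k x)) /\
  (forall x y, X x -> X y ->
     yb_map (idk k (yb_map (idk k (x, y)))) = idk k (yb_map (idk k (yb_map (x, y))))).

Definition in_soc (a : B) : Prop := forall b, circ a b = a + b.

End YB.

(* Main.v *)
Require Import Defs.
From mathcomp Require Import all_boot all_order all_algebra.
Local Open Scope ring_scope.
Import GRing.Theory.
Set Implicit Arguments.
From Stdlib Require Import FunctionalExtensionality.

Section Aux.
Variables (B : zmodType) (circ : B -> B -> B) (inv : B -> B).
Hypothesis hb : is_brace circ inv.

Definition lam (a z : B) := circ a z - a.

Lemma lamD a y z : lam a (y + z) = lam a y + lam a z.
Proof. case: hb => _ _ _ D; rewrite /lam D; rewrite !addrA; congr (_ - _).
rewrite -!addrA; congr (_ + _); by rewrite addrC. Qed.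

Lemma lam0r a : lam a 0 = 0.
Proof. have := lamD a 0 0; rewrite addr0 => H.
by apply: (@addrI _ (lam a 0)); rewrite -H addr0. Qed.

Lemma lamN a y : lam a (- y) = - lam a y.
Proof. apply/eqP; rewrite -subr_eq0 opprK -lamD addNr; exact/eqP/lam0r. Qed.

Lemma lamB a y z : lam a (y - z) = lam a y - lam a z.
Proof. by rewrite lamD lamN. Qed.

Lemma lam2 a y : lam a (y *+ 2) = lam a y *+ 2.
Proof. by rewrite !mulr2n lamD. Qed.

Lemma lam_comp a b z : lam a (lam b z) = lam (circ a b) z.
Proof. rewrite lamB /lam; case: hb => A _ _ _; rewrite A.
by rewrite opprB addrA subrK. Qed.

Lemma lam0 z : lam 0 z = z.
Proof. case: hb => _ I _ _; by rewrite /lam (proj1 (I z)) subr0. Qed.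

Lemma lam_invl p z : lam (inv p) (lam p z) = z.
Proof. case: hb => _ _ V _; by rewrite lam_comp (proj1 (V p)) lam0. Qed.

Lemma lam_invr p z : lam p (lam (inv p) z) = z.
Proof. case: hb => _ _ V _; by rewrite lam_comp (proj2 (V p)) lam0. Qed.

Lemma bsigmaE : bsigma circ = lam. Proof. by []. Qed.
Lemma btauE y x : btau circ inv y x = lam (inv (lam x y)) x. Proof. by []. Qed.

Lemma yb_mapE x y : yb_map circ inv (x, y) = (lam x y, lam (inv (lam x y)) x).
Proof. by []. Qed.

Lemma refl_gen (X : B -> Prop) (k : B -> B) (d : B) :
  (forall w z, lam w (k z) = k (lam w z)) ->
  (forall w, X w -> lam w d = d) ->
  is_solution circ inv X ->
  (forall x, X x -> X (k x + d)) ->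
  is_reflection circ inv X (fun x => k x + d).
Proof.
move=> kc Hd [sol _] kX; split => // x y Xx Xy.
rewrite /idk /= !yb_mapE /=.
have Xa : X (lam x y) by have := sol x y Xx Xy; rewrite yb_mapE => -[].
have Xu : X (lam x (k y + d)) by have := sol x _ Xx (kX y Xy); rewrite yb_mapE => -[].
have Xp : X (k x + d) by apply: kX.
have Eu : lam x (k y + d) = k (lam x y) + d by rewrite lamD kc Hd.
have Ep1 : lam (lam x (k y + d)) (k (lam (inv (lam x (k y + d))) x) + d) = k x + d.
  by rewrite lamD kc lam_invr Hd.
have Ep2 : lam (lam x y) (k (lam (inv (lam x y)) x) + d) = k x + d.
  by rewrite lamD kc lam_invr Hd.
rewrite !btauE !bsigmaE Ep1 Ep2; congr (_, _).
rewrite Eu lamD kc; congr (_ + _).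
have := lam_invl (k x + d) d; by rewrite (Hd _ Xp).
Qed.

End Aux.

Theorem mainTheorem11 (B : zmodType) (circ : B -> B -> B) (inv : B -> B)
  (X : B -> Prop) (c : B) :
  is_brace circ inv ->
  is_solution circ inv X ->
  (forall x, circ c x = circ x c) ->
  (* (1) *)
  ((forall x, X x -> X (circ c x - c)) ->
   in_soc circ (circ c c) ->
   is_reflection circ inv X (fun x => circ c x - c) /\
   (forall x, X x -> circ c (circ c x - c) - c = x)) /\
  (* (1), in particular when c o c = 0 *)
  ((forall x, X x -> X (circ c x - c)) ->
   circ c c = 0 ->
   is_reflection circ inv X (fun x => circ c x - c) /\
   (forall x, X x -> circ c (circ c x - c) - c = x)) /\
  (* (2) *)
  ((forall x, X x -> (circ c x) *+ 2 = c *+ 2 + x *+ 2) ->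
   circ c c = 0 ->
   (forall x, X x -> X (circ c x + c)) ->
   is_reflection circ inv X (fun x => circ c x + c) /\
   (forall x, X x -> circ c (circ c x + c) + c = x)).
Proof.
move=> hb sol cen.
have kc : forall w z, lam B circ w (lam B circ c z) = lam B circ c (lam B circ w z).
  by move=> w z; rewrite !(lam_comp hb) cen.
have part1 : (forall x, X x -> X (circ c x - c)) ->
   in_soc circ (circ c c) ->
   is_reflection circ inv X (fun x => circ c x - c) /\
   (forall x, X x -> circ c (circ c x - c) - c = x).
  move=> kX soc; split.
    have := @refl_gen _ circ inv hb X (lam B circ c) 0 kc.
    have -> : (fun x => lam B circ c x + 0) = (fun x => circ c x - c).
      by apply: functional_extensionality => x; rewrite addr0.
    apply; [by move=> w _; exact: (lam0r hb) | exact: sol |].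
    by move=> x Xx; rewrite /lam addr0; apply: kX.
  move=> x _; have := lam_comp hb c c x; rewrite /lam => ->.
  by rewrite soc addrC addKr.
split => //.
split.
  move=> kX cc; apply: part1 => // b; by rewrite cc; case: hb => _ I _ _; rewrite (proj1 (I b)) add0r.
move=> h2 cc kX.
have Hd : forall w, X w -> lam B circ w (c *+ 2) = c *+ 2.
  move=> w Xw; rewrite (lam2 hb) /lam mulrnBl -cen h2 //.
  by rewrite addrK.
split.
  have := @refl_gen _ circ inv hb X (lam B circ c) (c *+ 2) kc Hd sol.
  have -> : (fun x => lam B circ c x + c *+ 2) = (fun x => circ c x + c).
    by apply: functional_extensionality => x; rewrite /lam mulr2n addrA subrK.
  apply=> x Xx; rewrite /lam mulr2n addrA subrK; exact: kX.
move=> x _.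
have -> : circ c x + c = lam B circ c x + c *+ 2 by rewrite /lam mulr2n addrA subrK.
have := lam_comp hb c c x; rewrite cc (lam0 hb) => E.
have cE : circ c (lam B circ c x + c *+ 2) = lam B circ c (lam B circ c x + c *+ 2) + c.
  by rewrite /lam subrK.
rewrite cE (lamD hb) E (lam2 hb) /lam cc.
have -> : (0 - c) = - c by exact: sub0r.
by rewrite mulNrn mulr2n opprD !addrA subrK subrK.
Qed.
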